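(* As $\omega\to0^+$, the fundamental solution $\boldsymbol\Gamma^\omega$ has the asymptotic expansion $$\boldsymbol\Gamma^\omega(\mathbf{x})=\boldsymbol\Gamma(\mathbf{x})+\gamma_\omega\mathbf{I}_2+\omega^2\ln\omega\,\rho\boldsymbol\Gamma_1(\mathbf{x})+\omega^2\rho\ln\sqrt\rho\,\boldsymbol\Gamma_1(\mathbf{x})+\omega^2\rho\boldsymbol\Gamma_2(\mathbf{x})+\mathcal{O}(\omega^4\ln\omega+\omega^4),$$ where $\boldsymbol\Gamma_1(\mathbf{x})=\beta_2|\mathbf{x}|^2\mathbf{I}_2+\beta_3\mathbf{x}\mathbf{x}^T$, $\boldsymbol\Gamma_2(\mathbf{x})=\beta_1|\mathbf{x}|^2\mathbf{I}_2+\beta_2\ln|\mathbf{x}||\mathbf{x}|^2\mathbf{I}_2+\beta_3\ln|\mathbf{x}|\mathbf{x}\mathbf{x}^T+\beta_4\mathbf{x}\mathbf{x}^T$, $\gamma_\omega=\alpha_1\ln(\sqrt\rho\,\omega)+\alpha$ with $\alpha=\frac{\alpha_1}2E_c+\frac{\alpha_2}2-\frac1{8\pi}\big(\frac1\mu\ln\mu+\frac1{2\mu+\lambda}\ln(2\mu+\lambda)\big)$, and $\beta_1=(\frac12E_c-1)\beta_2-\frac18\beta_3+\frac1{2^6\pi}\big(\frac3{\mu^2}\ln\mu+\frac1{(2\mu+\lambda)^2}\ln(2\mu+\lambda)\big)$, $\beta_2=-\frac1{2^5\pi}\big(\frac3{\mu^2}+\frac1{(2\mu+\lambda)^2}\big)$,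 $\beta_3=\frac1{2^4\pi}\big(\frac1{\mu^2}-\frac1{(2\mu+\lambda)^2}\big)$, $\beta_4=\frac14(2E_c-3)\beta_3-\frac1{2^5\pi}\big(\frac1{\mu^2}\ln\mu-\frac1{(2\mu+\lambda)^2}\ln(2\mu+\lambda)\big)$.
   Context: Lamé constants $\lambda,\mu$, density $\rho>0$; $c_s=\sqrt{\mu/\rho}$, $c_p=\sqrt{(\lambda+2\mu)/\rho}$, $k_s=\omega/c_s$, $k_p=\omega/c_p$. The fundamental solution of $\mu\Delta+(\lambda+\mu)\nabla\nabla\cdot+\omega^2\rho$ in $\mathbb{R}^2$ is $\boldsymbol\Gamma^\omega(\mathbf{x})=-\frac{\mathrm{i}}{4\mu}H_0^{(1)}(k_s|\mathbf{x}|)\mathbf{I}_2+\frac{\mathrm{i}}{4\omega^2\rho}\nabla\nabla\big(H_0^{(1)}(k_p|\mathbf{x}|)-H_0^{(1)}(k_s|\mathbf{x}|)\big)$. $\boldsymbol\Gamma(\mathbf{x})=\alpha_1\ln|\mathbf{x}|\mathbf{I}_2-\alpha_2\frac{\mathbf{x}\mathbf{x}^T}{|\mathbf{x}|^2}$, $\alpha_1=\frac1{4\pi}(\frac1\mu+\frac1{2\mu+\lambda})$, $\alpha_2=\frac1{4\pi}(\frac1\mu-\frac1{2\mu+\lambda})$. $E_c=2\gamma-\mathrm{i}\pi-2\ln2$, $\gamma$ Euler's constant. *)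

(* Defs.v *)
From Stdlib Require Import Reals Factorial.
From Coquelicot Require Import Coquelicot.
Open Scope R_scope.

Definition harmonic (n : nat) : R := sum_f 1 n (fun m => / INR m).
Definition harm (k : nat) : R := match k with O => 0 | S n => harmonic (S n) end.
Definition euler_gamma : R := real (Lim_seq (fun n => harm n - ln (INR n))).

Definition J0 (t : R) : R :=
  Series (fun k => (-1) ^ k * (t / 2) ^ (2 * k) / (INR (Factorial.fact k)) ^ 2).
Definition Y0 (t : R) : R :=
  2 / PI * (ln (t / 2) + euler_gamma) * J0 t
  + 2 / PI * Series (fun k => (-1) ^ (k + 1) * harm k * (t / 2) ^ (2 * k) / (INR (Factorial.fact k)) ^ 2).
Definition H0 (t : R) : C := (RtoC (J0 t) + Ci * RtoC (Y0 t))%C.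

Definition coord (x : R * R) (i : nat) : R := if Nat.eqb i 0 then fst x else snd x.
Definition norm2 (x : R * R) : R := sqrt (fst x ^ 2 + snd x ^ 2).
Definition kron (i j : nat) : R := if Nat.eqb i j then 1 else 0.

Definition partial (f : R * R -> R) (i : nat) (y : R * R) : R :=
  if Nat.eqb i 0 then Derive (fun t => f (t, snd y)) (fst y)
  else Derive (fun t => f (fst y, t)) (snd y).
Definition hess (f : R * R -> R) (i j : nat) (y : R * R) : R :=
  partial (fun z => partial f j z) i y.

Definition k_s (lam mu rho om : R) : R := om / sqrt (mu / rho).
Definition k_p (lam mu rho om : R) : R := om / sqrt ((lam + 2 * mu) / rho).

(** Fundamental solution Gamma^omega (entry (i,j)); the Hessian of the complex
    function H0(k_p|x|) - H0(k_s|x|) is the Hessian of its real part plus i times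
    the Hessian of its imaginary part. *)
Definition Gamma_om (lam mu rho om : R) (x : R * R) (i j : nat) : C :=
  let ks := k_s lam mu rho om in
  let kp := k_p lam mu rho om in
  ( - (Ci / RtoC (4 * mu)%R) * H0 (ks * norm2 x)%R * RtoC (kron i j)
    + Ci / RtoC (4 * om ^ 2 * rho)%R *
      ( RtoC (hess (fun y => (J0 (kp * norm2 y) - J0 (ks * norm2 y))%R) i j x)
        + Ci * RtoC (hess (fun y => (Y0 (kp * norm2 y) - Y0 (ks * norm2 y))%R) i j x)) )%C.

Definition alpha1 (lam mu : R) : R := / (4 * PI) * (/ mu + / (2 * mu + lam)).
Definition alpha2 (lam mu : R) : R := / (4 * PI) * (/ mu - / (2 * mu + lam)).

Definition Gamma0 (lam mu : R) (x : R * R) (i j : nat) : R :=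
  alpha1 lam mu * ln (norm2 x) * kron i j
  - alpha2 lam mu * coord x i * coord x j / (norm2 x) ^ 2.

Definition E_c : C := (RtoC (2 * euler_gamma)%R - Ci * RtoC PI - RtoC (2 * ln 2)%R)%C.

Definition alpha (lam mu : R) : C :=
  (RtoC (alpha1 lam mu) / 2 * E_c + RtoC (alpha2 lam mu / 2
   - / (8 * PI) * (/ mu * ln mu + / (2 * mu + lam) * ln (2 * mu + lam))))%C.

Definition beta2 (lam mu : R) : R :=
  - / (2 ^ 5 * PI) * (3 / mu ^ 2 + / (2 * mu + lam) ^ 2).
Definition beta3 (lam mu : R) : R :=
  / (2 ^ 4 * PI) * (/ mu ^ 2 - / (2 * mu + lam) ^ 2).
Definition beta1 (lam mu : R) : C :=
  ((E_c / 2 - 1) * RtoC (beta2 lam mu)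
   + RtoC (- / 8 * beta3 lam mu
           + / (2 ^ 6 * PI) * (3 / mu ^ 2 * ln mu + / (2 * mu + lam) ^ 2 * ln (2 * mu + lam))))%C.
Definition beta4 (lam mu : R) : C :=
  (/ 4 * (2 * E_c - 3) * RtoC (beta3 lam mu)
   - RtoC (/ (2 ^ 5 * PI) * (/ mu ^ 2 * ln mu - / (2 * mu + lam) ^ 2 * ln (2 * mu + lam))))%C.

Definition Gamma1 (lam mu : R) (x : R * R) (i j : nat) : R :=
  beta2 lam mu * (norm2 x) ^ 2 * kron i j + beta3 lam mu * coord x i * coord x j.

Definition Gamma2 (lam mu : R) (x : R * R) (i j : nat) : C :=
  (beta1 lam mu * RtoC ((norm2 x) ^ 2 * kron i j)
   + RtoC (beta2 lam mu * ln (norm2 x) * (norm2 x) ^ 2 * kron i j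
           + beta3 lam mu * ln (norm2 x) * coord x i * coord x j)
   + beta4 lam mu * RtoC (coord x i * coord x j))%C.

Definition gamma_om (lam mu rho om : R) : C :=
  (RtoC (alpha1 lam mu * ln (sqrt rho * om)) + alpha lam mu)%C.

Definition expansion (lam mu rho om : R) (x : R * R) (i j : nat) : C :=
  (RtoC (Gamma0 lam mu x i j) + gamma_om lam mu rho om * RtoC (kron i j)
   + RtoC (om ^ 2 * ln om * rho * Gamma1 lam mu x i j)
   + RtoC (om ^ 2 * rho * ln (sqrt rho) * Gamma1 lam mu x i j)
   + RtoC (om ^ 2 * rho) * Gamma2 lam mu x i j)%C.

(* Main.v *)
Require Import Defs.
From Stdlib Require Import Reals Lra Lia Factorial.
From Coquelicot Require Import Coquelicot.
Open Scope R_scope.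

Definition good (a : nat -> R) := exists C, forall k, Rabs (a k) <= C / INR (fact k).

Lemma good_C a C : (forall k, Rabs (a k) <= C / INR (fact k)) -> 0 <= C.
Proof. intros H. specialize (H 0%nat). simpl in H. pose proof (Rabs_pos (a 0%nat)). lra. Qed.

Lemma fact_pos' n : 0 < INR (fact n).
Proof. apply INR_fact_lt_0. Qed.

Lemma good_decr a n : good a -> good (PS_decr_n a n).
Proof.
  intros [C HC]. exists C. intros k. unfold PS_decr_n.
  pose proof (good_C _ _ HC). eapply Rle_trans; [apply HC|].
  unfold Rdiv. apply Rmult_le_compat_l; auto.
  apply Rinv_le_contravar. apply fact_pos'. apply le_INR. apply fact_le. lia.
Qed.

Lemma good_derive a : good a -> good (PS_derive a).
Proof.
  intros [C HC]. exists C. intros k. unfold PS_derive.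
  pose proof (good_C _ _ HC). rewrite Rabs_mult, Rabs_right by (apply Rle_ge, pos_INR).
  specialize (HC (S k)). replace (fact (S k)) with (S k * fact k)%nat in HC by reflexivity. rewrite mult_INR in HC.
  pose proof (fact_pos' k). pose proof (lt_0_INR (S k) ltac:(lia)).
  apply (Rmult_le_compat_l (INR (S k))) in HC; [|lra].
  eapply Rle_trans; [exact HC|]. right. field. lra.
Qed.

Lemma harm_bound k : 0 <= harm k <= INR k.
Proof.
  destruct k as [|n]. simpl. lra.
  unfold harm, harmonic, sum_f. replace (S n - 1)%nat with n by lia.
  induction n as [|n IH].
  - simpl. lra.
  - rewrite tech5. rewrite (S_INR (S n)).
    assert (0 < / INR (S n + 1)) by (apply Rinv_0_lt_compat, lt_0_INR; lia).
    assert (/ INR (S n + 1) <= 1).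
    { rewrite <- Rinv_1. apply Rinv_le_contravar. lra. replace 1 with (INR 1) by reflexivity. apply le_INR. lia. }
    lra.
Qed.

Lemma le_fact k : (k <= fact k)%nat.
Proof. induction k. simpl; lia. simpl. pose proof (lt_O_fact k). nia. Qed.

Definition cA (k : nat) : R := (-1) ^ k / (INR (fact k)) ^ 2.
Definition dB (k : nat) : R := (-1) ^ (k + 1) * harm k / (INR (fact k)) ^ 2.

Lemma good_cA : good cA.
Proof.
  exists 1. intros k. unfold cA. unfold Rdiv. rewrite Rabs_mult, pow_1_abs, Rabs_right.
  2: { apply Rle_ge, Rlt_le, Rinv_0_lt_compat. pose proof (fact_pos' k). nra. }
  pose proof (fact_pos' k). assert (1 <= INR (fact k)).
  { replace 1 with (INR 1) by reflexivity. apply le_INR. pose proof (lt_O_fact k). lia. }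
  rewrite !Rmult_1_l. apply Rinv_le_contravar. lra. nra.
Qed.

Lemma good_dB : good dB.
Proof.
  exists 1. intros k. unfold dB. unfold Rdiv. rewrite !Rabs_mult, pow_1_abs, (Rabs_right (/ _)).
  2: { apply Rle_ge, Rlt_le, Rinv_0_lt_compat. pose proof (fact_pos' k). nra. }
  pose proof (fact_pos' k). pose proof (harm_bound k).
  assert (INR k <= INR (fact k)) by (apply le_INR, le_fact).
  rewrite Rabs_right by lra.
  apply (Rmult_le_reg_r (INR (fact k) ^ 2)). nra.
  field_simplify; nra.
Qed.
Lemma good_disk a r : good a -> CV_disk a r.
Proof.
  intros [C HC]. unfold CV_disk.
  assert (He : ex_series (fun n => scal C (scal (pow_n (Rabs r) n) (/ INR (fact n))))).
  { apply (ex_series_scal C (fun n => scal (pow_n (Rabs r) n) (/ INR (fact n)))). exists (exp (Rabs r)). exact (is_exp_Reals (Rabs r)). }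
  eapply (@ex_series_le R_AbsRing R_CompleteNormedModule); [|exact He].
  intros n. change (norm (Rabs (a n * r ^ n))) with (Rabs (Rabs (a n * r ^ n))). unfold abs; simpl.
  unfold scal; simpl; unfold mult; simpl. change (pow_n (Rabs r) n) with (Rabs r ^ n).
  rewrite Rabs_Rabsolu, Rabs_mult, <- RPow_abs.
  specialize (HC n). 
  assert (0 < INR (fact n)) by apply INR_fact_lt_0.
  assert (0 <= Rabs r ^ n) by (apply pow_le; apply Rabs_pos).
  unfold Rdiv in HC. 
  replace (C * (Rabs r ^ n * / INR (fact n))) with ((C * / INR (fact n)) * Rabs r ^ n) by ring.
  apply Rmult_le_compat_r; auto.
Qed.

Lemma good_rad a x : good a -> Rbar_lt (Rabs x) (CV_radius a).
Proof.
  intros G. unfold CV_radius.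
  destruct (Lub_Rbar_correct (CV_disk a)) as [Hub _].
  specialize (Hub (Rabs x + 1) (good_disk a _ G)).
  destruct (Lub_Rbar (CV_disk a)) as [l| |]; simpl in *; auto; lra.
Qed.

Lemma decr_bound a n : good a -> exists M eta, 0 < eta /\ forall u, Rabs u < eta -> Rabs (PSeries (PS_decr_n a n) u) <= M.
Proof.
  intros G. pose proof (good_decr a n G) as G'.
  pose proof (PSeries_continuity _ 0 (good_rad _ 0 G')) as Hc.
  destruct (Hc 1 Rlt_0_1) as [alp [Halp H]].
  exists (Rabs (PSeries (PS_decr_n a n) 0) + 1), alp. split; auto.
  intros u Hu. destruct (Req_dec u 0) as [->|Hu0]. lra.
  assert (Hd : R_dist (PSeries (PS_decr_n a n) u) (PSeries (PS_decr_n a n) 0) < 1).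
  { apply H. split. split. exact I. auto. simpl. unfold R_dist. rewrite Rminus_0_r. auto. }
  unfold R_dist in Hd. pose proof (Rabs_triang_inv (PSeries (PS_decr_n a n) u) (PSeries (PS_decr_n a n) 0)). lra.
Qed.

Lemma expand a n u : good a -> PSeries a u = sum_f_R0 (fun k => a k * u ^ k) n + u ^ S n * PSeries (PS_decr_n a (S n)) u.
Proof. intros G. apply PSeries_decr_n. apply CV_radius_inside. apply good_rad; auto. Qed.

Definition RA3 := PSeries (PS_decr_n cA 3).
Definition RA1 := PSeries (PS_decr_n (PS_derive cA) 2).
Definition RA2 := PSeries (PS_decr_n (PS_derive (PS_derive cA)) 1).
Definition RB := PSeries (PS_decr_n dB 2).
Definition RB1 := PSeries (PS_decr_n (PS_derive dB) 2).
Definition RB2 := PSeries (PS_decr_n (PS_derive (PS_derive dB)) 1).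
Definition A0 := PSeries cA.
Definition A1 := PSeries (PS_derive cA).
Definition A2 := PSeries (PS_derive (PS_derive cA)).
Definition B0 := PSeries dB.
Definition B1 := PSeries (PS_derive dB).
Definition B2 := PSeries (PS_derive (PS_derive dB)).

Lemma A0_exp u : A0 u = 1 - u + u^2/4 + u^3 * RA3 u.
Proof. unfold A0, RA3. rewrite (expand cA 2 u good_cA). simpl. unfold cA; simpl. field. Qed.
Lemma A1_exp u : A1 u = -1 + u/2 + u^2 * RA1 u.
Proof. unfold A1, RA1. rewrite (expand _ 1 u (good_derive _ good_cA)). simpl. unfold PS_derive, cA; simpl. field. Qed.
Lemma A2_exp u : A2 u = 1/2 + u * RA2 u.
Proof. unfold A2, RA2. rewrite (expand _ 0 u (good_derive _ (good_derive _ good_cA))). simpl. unfold PS_derive, cA; simpl. field. Qed.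
Lemma B0_exp u : B0 u = u + u^2 * RB u.
Proof. unfold B0, RB. rewrite (expand dB 1 u good_dB). simpl. unfold dB, harm, harmonic, sum_f; simpl. field. Qed.
Lemma B1_exp u : B1 u = 1 - 3/4*u + u^2 * RB1 u.
Proof. unfold B1, RB1. rewrite (expand _ 1 u (good_derive _ good_dB)). simpl. unfold PS_derive, dB, harm, harmonic, sum_f; simpl. field. Qed.
Lemma B2_exp u : B2 u = -3/4 + u * RB2 u.
Proof. unfold B2, RB2. rewrite (expand _ 0 u (good_derive _ (good_derive _ good_dB))). simpl. unfold PS_derive, dB, harm, harmonic, sum_f; simpl. field. Qed.

Lemma dA0 u : is_derive A0 u (A1 u).
Proof. apply is_derive_PSeries, good_rad, good_cA. Qed.
Lemma dA1 u : is_derive A1 u (A2 u).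
Proof. apply is_derive_PSeries, good_rad, good_derive, good_cA. Qed.
Lemma dB0 u : is_derive B0 u (B1 u).
Proof. apply is_derive_PSeries, good_rad, good_dB. Qed.
Lemma dB1 u : is_derive B1 u (B2 u).
Proof. apply is_derive_PSeries, good_rad, good_derive, good_dB. Qed.

Definition Phi (v : R) := / PI * ln v * A0 v + 2 / PI * (euler_gamma * A0 v + B0 v).
Definition Phi1 (v : R) := / PI * (A0 v / v + ln v * A1 v) + 2 / PI * (euler_gamma * A1 v + B1 v).
Definition Phi2 (v : R) := / PI * (- A0 v / v ^ 2 + 2 * A1 v / v + ln v * A2 v) + 2 / PI * (euler_gamma * A2 v + B2 v).

Ltac sides := repeat match goal with
 | |- _ /\ _ => split
 | |- True => exact I
 | |- ex_derive (fun x => A0 x) _ => eexists; apply dA0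
 | |- ex_derive (fun x => A1 x) _ => eexists; apply dA1
 | |- ex_derive (fun x => B0 x) _ => eexists; apply dB0
 | |- ex_derive (fun x => B1 x) _ => eexists; apply dB1
 | |- 0 < _ => assumption
 | |- _ <> 0 => apply Rgt_not_eq; assumption
 end.
Lemma DA0 v : Derive (fun x : R => A0 x) v = A1 v. Proof. apply is_derive_unique, dA0. Qed.
Lemma DA1 v : Derive (fun x : R => A1 x) v = A2 v. Proof. apply is_derive_unique, dA1. Qed.
Lemma DB0 v : Derive (fun x : R => B0 x) v = B1 v. Proof. apply is_derive_unique, dB0. Qed.
Lemma DB1 v : Derive (fun x : R => B1 x) v = B2 v. Proof. apply is_derive_unique, dB1. Qed.
Ltac rwD := try rewrite !DA0; try rewrite !DA1; try rewrite !DB0; try rewrite !DB1.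

Lemma PI_neq0 : PI <> 0.
Proof. apply Rgt_not_eq, PI_RGT_0. Qed.

Lemma dPhi v : 0 < v -> is_derive Phi v (Phi1 v).
Proof.
  intros Hv. unfold Phi. auto_derive; [sides|].
  rwD. unfold Phi1. field. split; [exact PI_neq0|lra].
Qed.

Lemma dPhi1 v : 0 < v -> is_derive Phi1 v (Phi2 v).
Proof.
  intros Hv. unfold Phi1. auto_derive; [sides|].
  rwD. unfold Phi2. field. split; [exact PI_neq0|lra].
Qed.

Lemma pow_n_R x k : pow_n (K:=R_AbsRing) x k = x ^ k.
Proof. induction k; simpl; auto. Qed.

Lemma J0_A t : J0 t = A0 (t^2/4).
Proof.
  unfold J0, A0, PSeries. apply Series_ext. intros k.
  rewrite pow_mult. replace ((t/2)^2) with (t^2/4) by field. unfold cA. field.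
  apply Rgt_not_eq, INR_fact_lt_0.
Qed.

Lemma S_B t : Series (fun k => (-1) ^ (k + 1) * harm k * (t / 2) ^ (2 * k) / (INR (Factorial.fact k)) ^ 2) = B0 (t^2/4).
Proof.
  unfold B0, PSeries. apply Series_ext. intros k.
  rewrite pow_mult. replace ((t/2)^2) with (t^2/4) by field. unfold dB. field.
  apply Rgt_not_eq, INR_fact_lt_0.
Qed.

Lemma ln_sq t : 0 < t -> ln (t^2) = 2 * ln t.
Proof. intros Ht. rewrite ln_pow by auto. simpl. ring. Qed.

Lemma Y0_Phi t : 0 < t -> Y0 t = Phi (t^2/4).
Proof.
  intros Ht. unfold Y0. rewrite S_B, J0_A. unfold Phi.
  replace (t^2/4) with ((t/2)^2) by field. rewrite ln_sq by lra.
  field. exact PI_neq0.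
Qed.

Definition qq (y : R * R) := fst y ^ 2 + snd y ^ 2.

Lemma loc_pos (c t : R) : 0 < t ^ 2 + c -> locally t (fun s => 0 < s ^ 2 + c).
Proof.
  intros H.
  assert (Hc : continuous (fun s => s ^ 2 + c) t).
  { apply (ex_derive_continuous (K:=R_AbsRing) (V:=R_NormedModule)). auto_derive. exact I. }
  exact (Hc (fun u => 0 < u) (open_gt 0 _ H)).
Qed.

Section Rad.
Variables (G G1 G2 : R -> R).
Hypothesis dG : forall u, 0 < u -> is_derive G u (G1 u).
Hypothesis dG1 : forall u, 0 < u -> is_derive G1 u (G2 u).

Lemma dcomp (H K : R -> R) c t : (forall u, 0 < u -> is_derive H u (K u)) -> 0 < t ^ 2 + c ->
  is_derive (fun s => H (s ^ 2 + c)) t (2 * t * K (t ^ 2 + c)).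
Proof.
  intros dH Hp.
  eapply is_derive_ext; [|apply (is_derive_comp H (fun s => s ^ 2 + c))].
  - reflexivity.
  - apply dH; auto.
  - auto_derive; [exact I | ring].
Qed.

Lemma DG1 u : 0 < u -> Derive (fun x : R => G1 x) u = G2 u.
Proof. intros; apply is_derive_unique, dG1; auto. Qed.

Lemma partial_rad f : (forall y, 0 < qq y -> f y = G (qq y)) ->
  forall z, 0 < qq z -> forall j, partial f j z = 2 * G1 (qq z) * coord z j.
Proof.
  intros Hf [z1 z2] Hz j. unfold partial, coord, qq in *; cbn [fst snd Nat.eqb] in *.
  destruct (Nat.eqb j 0).
  - apply is_derive_unique.
    apply (is_derive_ext_loc (fun s => G (s ^ 2 + z2 ^ 2))).
    + apply (filter_imp (fun s => 0 < s ^ 2 + z2 ^ 2)); [|apply loc_pos; auto].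
      intros s Hs. rewrite Hf;cbn [fst snd Nat.eqb]; auto.
    + replace (2 * G1 (z1 ^ 2 + z2 ^ 2) * z1) with (2 * z1 * G1 (z1 ^ 2 + z2 ^ 2)) by ring.
      apply dcomp; auto.
  - apply is_derive_unique.
    apply (is_derive_ext_loc (fun s => G (s ^ 2 + z1 ^ 2))).
    + apply (filter_imp (fun s => 0 < s ^ 2 + z1 ^ 2)); [|apply loc_pos; lra].
      intros s Hs. rewrite Hf; cbn [fst snd Nat.eqb]. f_equal; ring. lra.
    + replace (z1 ^ 2 + z2 ^ 2) with (z2 ^ 2 + z1 ^ 2) by ring.
      replace (2 * G1 (z2 ^ 2 + z1 ^ 2) * z2) with (2 * z2 * G1 (z2 ^ 2 + z1 ^ 2)) by ring.
      apply dcomp; auto.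
  lra.
Qed.

Lemma dlin c t0 a b : 0 < t0 ^ 2 + c ->
  is_derive (fun t => 2 * G1 (t ^ 2 + c) * (a * t + b)) t0
    (4 * G2 (t0 ^ 2 + c) * t0 * (a * t0 + b) + 2 * G1 (t0 ^ 2 + c) * a).
Proof.
  intros Hp. auto_derive; replace (t0 * (t0 * 1)) with (t0 ^ 2) by ring.
  - eexists; apply dG1; auto.
  - rewrite DG1 by auto. ring.
Qed.

Lemma hess_rad f : (forall y, 0 < qq y -> f y = G (qq y)) ->
  forall y, 0 < qq y -> forall i j, (i < 2)%nat -> (j < 2)%nat ->
  hess f i j y = 4 * G2 (qq y) * coord y i * coord y j + 2 * G1 (qq y) * kron i j.
Proof.
  intros Hf [y1 y2] Hy i j Hi Hj. unfold hess.
  assert (Hs : forall c s, 0 < s ^ 2 + c -> locally s (fun t => 0 < t ^ 2 + c)) by (intros; apply loc_pos; auto).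
  unfold qq in Hy; cbn [fst snd] in Hy.
  destruct i as [|[|i]]; [| |lia]; destruct j as [|[|j]]; try lia;
  unfold partial at 1;cbn [fst snd Nat.eqb]; apply is_derive_unique.
  - apply (is_derive_ext_loc (fun t => 2 * G1 (t ^ 2 + y2 ^ 2) * (1 * t + 0))).
    + apply (filter_imp (fun s => 0 < s ^ 2 + y2 ^ 2)); [|apply Hs; auto].
      intros s H. rewrite (partial_rad f Hf) by (unfold qq; cbn [fst snd]; lra). unfold qq, coord; cbn [fst snd Nat.eqb]. try replace (y1 ^ 2 + s ^ 2) with (s ^ 2 + y1 ^ 2) by ring. match goal with |- ?a = ?b => change (@eq R a b) end; ring.
    + eapply is_derive_ext; [intros; reflexivity|]. 
      unfold qq, coord, kron; cbn [fst snd Nat.eqb].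
      replace (4 * G2 (y1 ^ 2 + y2 ^ 2) * y1 * y1 + 2 * G1 (y1 ^ 2 + y2 ^ 2) * 1) with
        (4 * G2 (y1 ^ 2 + y2 ^ 2) * y1 * (1 * y1 + 0) + 2 * G1 (y1 ^ 2 + y2 ^ 2) * 1) by ring.
      apply dlin; auto.
  - apply (is_derive_ext_loc (fun t => 2 * G1 (t ^ 2 + y2 ^ 2) * (0 * t + y2))).
    + apply (filter_imp (fun s => 0 < s ^ 2 + y2 ^ 2)); [|apply Hs; auto].
      intros s H. rewrite (partial_rad f Hf) by (unfold qq; cbn [fst snd]; lra). unfold qq, coord; cbn [fst snd Nat.eqb]. try replace (y1 ^ 2 + s ^ 2) with (s ^ 2 + y1 ^ 2) by ring. match goal with |- ?a = ?b => change (@eq R a b) end; ring.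
    + unfold qq, coord, kron; cbn [fst snd Nat.eqb].
      replace (4 * G2 (y1 ^ 2 + y2 ^ 2) * y1 * y2 + 2 * G1 (y1 ^ 2 + y2 ^ 2) * 0) with
        (4 * G2 (y1 ^ 2 + y2 ^ 2) * y1 * (0 * y1 + y2) + 2 * G1 (y1 ^ 2 + y2 ^ 2) * 0) by ring.
      apply dlin; auto.
  - apply (is_derive_ext_loc (fun t => 2 * G1 (t ^ 2 + y1 ^ 2) * (0 * t + y1))).
    + apply (filter_imp (fun s => 0 < s ^ 2 + y1 ^ 2)); [|apply Hs; lra].
      intros s H. rewrite (partial_rad f Hf) by (unfold qq; cbn [fst snd]; lra). unfold qq, coord; cbn [fst snd Nat.eqb]. try replace (y1 ^ 2 + s ^ 2) with (s ^ 2 + y1 ^ 2) by ring. match goal with |- ?a = ?b => change (@eq R a b) end; ring.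
    + unfold qq, coord, kron; cbn [fst snd Nat.eqb].
      replace (y1 ^ 2 + y2 ^ 2) with (y2 ^ 2 + y1 ^ 2) by ring.
      replace (4 * G2 (y2 ^ 2 + y1 ^ 2) * y2 * y1 + 2 * G1 (y2 ^ 2 + y1 ^ 2) * 0) with
        (4 * G2 (y2 ^ 2 + y1 ^ 2) * y2 * (0 * y2 + y1) + 2 * G1 (y2 ^ 2 + y1 ^ 2) * 0) by ring.
      apply dlin; lra.
  - apply (is_derive_ext_loc (fun t => 2 * G1 (t ^ 2 + y1 ^ 2) * (1 * t + 0))).
    + apply (filter_imp (fun s => 0 < s ^ 2 + y1 ^ 2)); [|apply Hs; lra].
      intros s H. rewrite (partial_rad f Hf) by (unfold qq; cbn [fst snd]; lra). unfold qq, coord; cbn [fst snd Nat.eqb]. try replace (y1 ^ 2 + s ^ 2) with (s ^ 2 + y1 ^ 2) by ring. match goal with |- ?a = ?b => change (@eq R a b) end; ring.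
    + unfold qq, coord, kron; cbn [fst snd Nat.eqb].
      replace (y1 ^ 2 + y2 ^ 2) with (y2 ^ 2 + y1 ^ 2) by ring.
      replace (4 * G2 (y2 ^ 2 + y1 ^ 2) * y2 * y2 + 2 * G1 (y2 ^ 2 + y1 ^ 2) * 1) with
        (4 * G2 (y2 ^ 2 + y1 ^ 2) * y2 * (1 * y2 + 0) + 2 * G1 (y2 ^ 2 + y1 ^ 2) * 1) by ring.
      apply dlin; lra.
Qed.
End Rad.

Lemma J0_sqrt k u : 0 <= u -> J0 (k * sqrt u) = A0 (k^2*u/4).
Proof. intros Hu. rewrite J0_A. f_equal. rewrite Rpow_mult_distr, pow2_sqrt by auto. reflexivity. Qed.

Lemma Y0_sqrt k u : 0 < k -> 0 < u -> Y0 (k * sqrt u) = Phi (k^2*u/4).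
Proof. intros Hk Hu. rewrite Y0_Phi. f_equal. rewrite Rpow_mult_distr, pow2_sqrt by lra. reflexivity.
  apply Rmult_lt_0_compat; auto. apply sqrt_lt_R0; auto. Qed.

Lemma dscale (H H' : R -> R) k : k <> 0 -> (forall v, 0 < v -> is_derive H v (H' v)) ->
  forall u, 0 < u -> is_derive (fun u => H (k^2*u/4)) u (k^2/4 * H' (k^2*u/4)).
Proof.
  intros Hk dH u Hu.
  assert (0 < k^2) by (apply pow2_gt_0; auto).
  eapply is_derive_ext; [|apply (is_derive_comp H (fun u => k^2*u/4))].
  - reflexivity.
  - apply dH. apply Rmult_lt_0_compat; [nra|lra].
  - auto_derive; [exact I | field].
Qed.

Section HX.
Variables (lam mu rho om : R) (x : R * R).
Hypotheses (Hmu : 0 < mu) (HP : 0 < 2 * mu + lam) (Hrho : 0 < rho) (Hom : 0 < om) (Hx : 0 < qq x).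

Let ks := k_s lam mu rho om.
Let kp := k_p lam mu rho om.

Lemma ks_pos : 0 < ks.
Proof. unfold ks, k_s. apply Rdiv_lt_0_compat; auto. apply sqrt_lt_R0. apply Rdiv_lt_0_compat; auto. Qed.
Lemma kp_pos : 0 < kp.
Proof. unfold kp, k_p. apply Rdiv_lt_0_compat; auto. apply sqrt_lt_R0. apply Rdiv_lt_0_compat; lra. Qed.

Lemma hessJ i j : (i < 2)%nat -> (j < 2)%nat ->
  hess (fun y => (J0 (kp * norm2 y) - J0 (ks * norm2 y))%R) i j x =
  4 * (kp^2/4 * (kp^2/4 * A2 (kp^2 * qq x/4)) - ks^2/4 * (ks^2/4 * A2 (ks^2 * qq x/4))) * coord x i * coord x j
  + 2 * (kp^2/4 * A1 (kp^2 * qq x/4) - ks^2/4 * A1 (ks^2 * qq x/4)) * kron i j.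
Proof.
  intros Hi Hj. pose proof ks_pos. pose proof kp_pos.
  apply (hess_rad (fun u => A0 (kp^2*u/4) - A0 (ks^2*u/4))
                  (fun u => kp^2/4 * A1 (kp^2*u/4) - ks^2/4 * A1 (ks^2*u/4))
                  (fun u => kp^2/4 * (kp^2/4 * A2 (kp^2*u/4)) - ks^2/4 * (ks^2/4 * A2 (ks^2*u/4)))); auto.
  - intros u Hu. apply (is_derive_minus (fun u => A0 (kp^2*u/4)) (fun u => A0 (ks^2*u/4)));
      apply dscale; try lra; intros; apply dA0.
  - intros u Hu. apply (is_derive_minus (fun u => kp^2/4 * A1 (kp^2*u/4)) (fun u => ks^2/4 * A1 (ks^2*u/4)));
      apply is_derive_scal; apply dscale; try lra; intros; apply dA1.
  - intros y Hy. unfold norm2. rewrite !J0_sqrt; unfold qq in Hy; auto; lra.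
Qed.

Lemma hessY i j : (i < 2)%nat -> (j < 2)%nat ->
  hess (fun y => (Y0 (kp * norm2 y) - Y0 (ks * norm2 y))%R) i j x =
  4 * (kp^2/4 * (kp^2/4 * Phi2 (kp^2 * qq x/4)) - ks^2/4 * (ks^2/4 * Phi2 (ks^2 * qq x/4))) * coord x i * coord x j
  + 2 * (kp^2/4 * Phi1 (kp^2 * qq x/4) - ks^2/4 * Phi1 (ks^2 * qq x/4)) * kron i j.
Proof.
  intros Hi Hj. pose proof ks_pos. pose proof kp_pos.
  apply (hess_rad (fun u => Phi (kp^2*u/4) - Phi (ks^2*u/4))
                  (fun u => kp^2/4 * Phi1 (kp^2*u/4) - ks^2/4 * Phi1 (ks^2*u/4))
                  (fun u => kp^2/4 * (kp^2/4 * Phi2 (kp^2*u/4)) - ks^2/4 * (ks^2/4 * Phi2 (ks^2*u/4)))); auto.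
  - intros u Hu. apply (is_derive_minus (fun u => Phi (kp^2*u/4)) (fun u => Phi (ks^2*u/4)));
      apply dscale; try lra; intros; apply dPhi; auto.
  - intros u Hu. apply (is_derive_minus (fun u => kp^2/4 * Phi1 (kp^2*u/4)) (fun u => ks^2/4 * Phi1 (ks^2*u/4)));
      apply is_derive_scal; apply dscale; try lra; intros; apply dPhi1; auto.
  - intros y Hy. unfold norm2. rewrite !Y0_sqrt; unfold qq in Hy; auto.
Qed.
End HX.

Definition D2' (L a3 a1 a2 b2 : R) := / PI * (- a3 + 2 * a1 + L * a2) + 2 / PI * (euler_gamma * a2 + b2).
Definition D1' (L a3 a1 b1 : R) := / PI * (a3 + L * a1) + 2 / PI * (euler_gamma * a1 + b1).

Definition Fre (mu P rho s0 p0 xi xj d Ls Lp vs vp : R) :=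
  d / (4 * mu) * s0 ^ 2 * (/ PI * Ls * (1/4 + vs * RA3 vs) + 2 / PI * (euler_gamma * (1/4 + vs * RA3 vs) + RB vs))
  - xi * xj / (16 * rho) * ((rho/P) ^ 2 * p0 * D2' Lp (RA3 vp) (RA1 vp) (RA2 vp) (RB2 vp)
                           - (rho/mu) ^ 2 * s0 * D2' Ls (RA3 vs) (RA1 vs) (RA2 vs) (RB2 vs))
  - d / (8 * rho) * ((rho/P) * p0 ^ 2 * D1' Lp (RA3 vp) (RA1 vp) (RB1 vp)
                    - (rho/mu) * s0 ^ 2 * D1' Ls (RA3 vs) (RA1 vs) (RB1 vs)).

Definition Fim (mu P rho s0 p0 xi xj d vs vp : R) :=
  - d / (4 * mu) * s0 ^ 2 * (1/4 + vs * RA3 vs)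
  + xi * xj / (16 * rho) * ((rho/P) ^ 2 * p0 * RA2 vp - (rho/mu) ^ 2 * s0 * RA2 vs)
  + d / (8 * rho) * ((rho/P) * p0 ^ 2 * RA1 vp - (rho/mu) * s0 ^ 2 * RA1 vs).

Lemma ln_sqrt' a : 0 < a -> ln (sqrt a) = ln a / 2.
Proof. intros Ha. rewrite <- (sqrt_sqrt a) at 2 by lra. rewrite ln_mult by (apply sqrt_lt_R0; auto). field. Qed.

Lemma cG m W Jv Y HJ HY d : m <> 0 -> W <> 0 ->
  (- (Ci / RtoC m) * (RtoC Jv + Ci * RtoC Y) * RtoC d + Ci / RtoC W * (RtoC HJ + Ci * RtoC HY))%C
  = (Y * d / m - HY / W, - (Jv * d / m) + HJ / W).
Proof.
  intros Hm HW. unfold Cminus, Cdiv, Cinv, Cmult, Cplus, Copp, RtoC, Ci. cbn [fst snd].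
  f_equal; field; lra.
Qed.

Lemma Ec_val : E_c = (2 * euler_gamma - 2 * ln 2, - PI).
Proof. unfold E_c, Cminus, Cmult, Cplus, Copp, RtoC, Ci. cbn [fst snd]. f_equal; ring. Qed.

Definition ReEc := 2 * euler_gamma - 2 * ln 2.

Lemma exp_val lam mu rho om x i j : 0 < mu -> 0 < 2 * mu + lam ->
  expansion lam mu rho om x i j =
  (Gamma0 lam mu x i j + (alpha1 lam mu * ln (sqrt rho * om) + (alpha1 lam mu / 2 * ReEc + (alpha2 lam mu / 2
     - / (8 * PI) * (/ mu * ln mu + / (2 * mu + lam) * ln (2 * mu + lam))))) * kron i j
   + om ^ 2 * ln om * rho * Gamma1 lam mu x i j + om ^ 2 * rho * ln (sqrt rho) * Gamma1 lam mu x i j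
   + om ^ 2 * rho * ((((ReEc / 2 - 1) * beta2 lam mu) + (- / 8 * beta3 lam mu
           + / (2 ^ 6 * PI) * (3 / mu ^ 2 * ln mu + / (2 * mu + lam) ^ 2 * ln (2 * mu + lam)))) * (norm2 x ^ 2 * kron i j)
      + (beta2 lam mu * ln (norm2 x) * (norm2 x) ^ 2 * kron i j + beta3 lam mu * ln (norm2 x) * coord x i * coord x j)
      + (/ 4 * (2 * ReEc - 3) * beta3 lam mu - / (2 ^ 5 * PI) * (/ mu ^ 2 * ln mu - / (2 * mu + lam) ^ 2 * ln (2 * mu + lam))) * (coord x i * coord x j)),
   alpha1 lam mu / 2 * (- PI) * kron i j
   + om ^ 2 * rho * (- PI / 2 * beta2 lam mu * (norm2 x ^ 2 * kron i j) - PI / 2 * beta3 lam mu * (coord x i * coord x j))).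
Proof.
  intros Hmu HP.
  unfold expansion, gamma_om, alpha, Gamma2, beta1, beta4. rewrite Ec_val. unfold ReEc.
  generalize (Gamma0 lam mu x i j) (Gamma1 lam mu x i j) (alpha1 lam mu) (alpha2 lam mu) (beta2 lam mu) (beta3 lam mu).
  intros G0 G1 a1 a2 b2 b3.
  unfold Cminus, Cdiv, Cinv, Cmult, Cplus, Copp, RtoC, Ci. cbn [fst snd].
  assert (PI <> 0) by exact PI_neq0.
  f_equal; field.
  all: repeat split; try lra; assumption.
Qed.


Lemma resid lam mu rho om x i j : 0 < mu -> 0 < 2 * mu + lam -> 0 < rho -> 0 < om -> 0 < qq x ->
  (i < 2)%nat -> (j < 2)%nat ->
  let s0 := rho / mu * qq x / 4 in
  let p0 := rho / (2 * mu + lam) * qq x / 4 in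
  (Gamma_om lam mu rho om x i j - expansion lam mu rho om x i j)%C =
  (om ^ 4 * Fre mu (2 * mu + lam) rho s0 p0 (coord x i) (coord x j) (kron i j)
      (ln (om ^ 2 * s0)) (ln (om ^ 2 * p0)) (om ^ 2 * s0) (om ^ 2 * p0),
   om ^ 4 * Fim mu (2 * mu + lam) rho s0 p0 (coord x i) (coord x j) (kron i j) (om ^ 2 * s0) (om ^ 2 * p0)).
Proof.
  intros Hmu HP Hrho Hom Hq Hi Hj s0 p0.
  unfold Gamma_om. cbv beta zeta.
  rewrite (hessJ lam mu rho om x Hmu HP Hrho Hom Hq i j Hi Hj).
  rewrite (hessY lam mu rho om x Hmu HP Hrho Hom Hq i j Hi Hj).
  unfold H0. unfold norm2 at 1 2. 
  rewrite J0_sqrt by (unfold qq in Hq; lra).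
  rewrite Y0_sqrt by (unfold qq in Hq; auto; apply ks_pos; auto).
  change (fst x ^ 2 + snd x ^ 2) with (qq x).
  assert (Eks : k_s lam mu rho om ^ 2 = om ^ 2 * rho / mu).
  { unfold k_s. unfold Rdiv at 1. rewrite Rpow_mult_distr, pow_inv, pow2_sqrt. field. lra.
    apply Rlt_le, Rdiv_lt_0_compat; auto. }
  assert (Ekp : k_p lam mu rho om ^ 2 = om ^ 2 * rho / (2 * mu + lam)).
  { unfold k_p. unfold Rdiv at 1. rewrite Rpow_mult_distr, pow_inv, pow2_sqrt. field. lra.
    apply Rlt_le, Rdiv_lt_0_compat; lra. }
  rewrite Eks, Ekp.
  replace (om ^ 2 * rho / mu * qq x / 4) with (om ^ 2 * s0) by (unfold s0; field; lra).
  replace (om ^ 2 * rho / (2 * mu + lam) * qq x / 4) with (om ^ 2 * p0) by (unfold p0; field; lra).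
  rewrite cG by (apply Rgt_not_eq; repeat apply Rmult_lt_0_compat; try apply pow_lt; lra).
  rewrite exp_val by auto.
  unfold Cminus, Cplus, Copp. cbn [fst snd].
  unfold Phi, Phi1, Phi2.
  rewrite !A0_exp, !A1_exp, !A2_exp, !B0_exp, !B1_exp, !B2_exp.
  assert (Hs0 : 0 < s0) by (unfold s0; apply Rdiv_lt_0_compat; [apply Rmult_lt_0_compat; [apply Rdiv_lt_0_compat|]|]; lra).
  assert (Hp0 : 0 < p0) by (unfold p0; apply Rdiv_lt_0_compat; [apply Rmult_lt_0_compat; [apply Rdiv_lt_0_compat|]|]; lra).
  assert (Hom2 : 0 < om ^ 2) by (apply pow_lt; auto).
  assert (L2 : ln 4 = 2 * ln 2).
  { replace 4 with (2 ^ 2) by ring. rewrite ln_pow by lra. simpl. ring. }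
  assert (Lvs : ln (om ^ 2 * s0) = 2 * ln om + ln rho - ln mu + ln (qq x) - 2 * ln 2).
  { assert (0 < rho / mu) by (apply Rdiv_lt_0_compat; lra).
    assert (0 < rho / mu * qq x) by (apply Rmult_lt_0_compat; lra).
    rewrite ln_mult by auto. rewrite ln_pow by auto. unfold s0.
    rewrite ln_div by lra. rewrite ln_mult by auto. rewrite ln_div by lra. rewrite L2. simpl. ring. }
  assert (Lvp : ln (om ^ 2 * p0) = 2 * ln om + ln rho - ln (2 * mu + lam) + ln (qq x) - 2 * ln 2).
  { assert (0 < rho / (2 * mu + lam)) by (apply Rdiv_lt_0_compat; lra).
    assert (0 < rho / (2 * mu + lam) * qq x) by (apply Rmult_lt_0_compat; lra).
    rewrite ln_mult by auto. rewrite ln_pow by auto. unfold p0.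
    rewrite ln_div by lra. rewrite ln_mult by auto. rewrite ln_div by lra. rewrite L2. simpl. ring. }
  unfold Fre, Fim, D2', D1'.
  rewrite Lvs, Lvp.
  unfold Gamma0, Gamma1, alpha1, alpha2, beta2, beta3, ReEc.
  assert (Nx : norm2 x ^ 2 = qq x).
  { unfold norm2. rewrite pow2_sqrt. reflexivity. unfold qq in Hq. lra. }
  assert (Lx : ln (norm2 x) = ln (qq x) / 2) by (unfold norm2; apply ln_sqrt'; auto).
  assert (Lr : ln (sqrt rho) = ln rho / 2) by (apply ln_sqrt'; auto).
  assert (Lro : ln (sqrt rho * om) = ln rho / 2 + ln om).
  { rewrite ln_mult. rewrite Lr. reflexivity. apply sqrt_lt_R0; auto. auto. }
  rewrite Nx, Lx, Lr, Lro.
  generalize (RA3 (om ^ 2 * s0)) (RA3 (om ^ 2 * p0)) (RA1 (om ^ 2 * s0)) (RA1 (om ^ 2 * p0))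
    (RA2 (om ^ 2 * s0)) (RA2 (om ^ 2 * p0)) (RB (om ^ 2 * s0)) (RB1 (om ^ 2 * s0)) (RB1 (om ^ 2 * p0))
    (RB2 (om ^ 2 * s0)) (RB2 (om ^ 2 * p0)).
  intros a3s a3p a1s a1p a2s a2p bs b1s b1p b2s b2p.
  unfold s0, p0 in *. clear Lvs Lvp Lx Lr Lro Nx Eks Ekp L2 Hs0 Hp0.
  generalize (ln om) (ln rho) (ln mu) (ln (2 * mu + lam)) (ln (qq x)) (ln 2) euler_gamma (coord x i) (coord x j) (kron i j).
  intros lom lrho lmu lP lq l2 g xi xj d.
  assert (PI <> 0) by exact PI_neq0.
  replace (om ^ 4) with ((om ^ 2) ^ 2) by ring.
  generalize (qq x) Hq. generalize (om ^ 2) Hom2. intros w Hw q Hq'.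
  f_equal.
  - field. repeat split; try lra; assumption.
  - field. repeat split; try lra; assumption.
Qed.

Lemma b_plus a b A B : Rabs a <= A -> Rabs b <= B -> Rabs (a + b) <= A + B.
Proof. intros. pose proof (Rabs_triang a b). lra. Qed.
Lemma b_minus a b A B : Rabs a <= A -> Rabs b <= B -> Rabs (a - b) <= A + B.
Proof. intros. pose proof (Rabs_triang a (-b)). rewrite Rabs_Ropp in H1. unfold Rminus. lra. Qed.
Lemma b_mult a b A B : Rabs a <= A -> Rabs b <= B -> Rabs (a * b) <= A * B.
Proof. intros. rewrite Rabs_mult. apply Rmult_le_compat; auto using Rabs_pos. Qed.
Lemma b_div a b A B : Rabs a <= A -> Rabs (/ b) <= B -> Rabs (a / b) <= A * B.
Proof. intros. unfold Rdiv. apply b_mult; auto. Qed.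
Lemma b_opp a A : Rabs a <= A -> Rabs (- a) <= A.
Proof. intros. rewrite Rabs_Ropp. auto. Qed.
Lemma b_pow a A n : Rabs a <= A -> Rabs (a ^ n) <= A ^ n.
Proof. intros. rewrite <- RPow_abs. apply pow_incr. split; auto using Rabs_pos. Qed.

Ltac bnd := first [ eassumption
  | eapply b_plus; [bnd|bnd]
  | eapply b_minus; [bnd|bnd]
  | eapply b_div; [bnd|bnd]
  | eapply b_mult; [bnd|bnd]
  | eapply b_opp; bnd
  | eapply b_pow; bnd
  | apply Rle_refl ].

Lemma Fre_b mu P rho s0 p0 M X Ls Lp : exists K, forall xi xj d vs vp,
  Rabs vs <= 1 -> Rabs vp <= 1 -> Rabs xi <= X -> Rabs xj <= X -> Rabs d <= 1 ->
  Rabs (RA3 vs) <= M -> Rabs (RA3 vp) <= M -> Rabs (RA1 vs) <= M -> Rabs (RA1 vp) <= M ->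
  Rabs (RA2 vs) <= M -> Rabs (RA2 vp) <= M -> Rabs (RB vs) <= M -> Rabs (RB1 vs) <= M ->
  Rabs (RB1 vp) <= M -> Rabs (RB2 vs) <= M -> Rabs (RB2 vp) <= M ->
  Rabs (Fre mu P rho s0 p0 xi xj d Ls Lp vs vp) <= K.
Proof.
  eexists. intros. unfold Fre, D2', D1'. bnd.
Qed.

Lemma Fim_b mu P rho s0 p0 M X : exists K, forall xi xj d vs vp,
  Rabs vs <= 1 -> Rabs vp <= 1 -> Rabs xi <= X -> Rabs xj <= X -> Rabs d <= 1 ->
  Rabs (RA3 vs) <= M -> Rabs (RA1 vs) <= M -> Rabs (RA1 vp) <= M ->
  Rabs (RA2 vs) <= M -> Rabs (RA2 vp) <= M ->
  Rabs (Fim mu P rho s0 p0 xi xj d vs vp) <= K.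
Proof.
  eexists. intros. unfold Fim. bnd.
Qed.

Lemma Fre_lin mu P rho s0 p0 xi xj d Ls Lp vs vp :
  Fre mu P rho s0 p0 xi xj d Ls Lp vs vp =
  Fre mu P rho s0 p0 xi xj d 0 0 vs vp
  + Ls * (Fre mu P rho s0 p0 xi xj d 1 0 vs vp - Fre mu P rho s0 p0 xi xj d 0 0 vs vp)
  + Lp * (Fre mu P rho s0 p0 xi xj d 0 1 vs vp - Fre mu P rho s0 p0 xi xj d 0 0 vs vp).
Proof. unfold Fre, D2', D1'. ring. Qed.

Lemma Cmod_le a b : Cmod (a, b) <= Rabs a + Rabs b.
Proof.
  unfold Cmod; cbn [fst snd]. pose proof (Rabs_pos a). pose proof (Rabs_pos b).
  rewrite <- (sqrt_pow2 (Rabs a + Rabs b)) by lra. apply sqrt_le_1_alt.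
  rewrite <- (pow2_abs a), <- (pow2_abs b). nra.
Qed.

Lemma bound_rem a n (G : good a) : exists M eta, 0 < eta /\ 0 <= M /\ forall u, Rabs u < eta -> Rabs (PSeries (PS_decr_n a n) u) <= M.
Proof.
  destruct (decr_bound a n G) as [M [e [He HM]]]. exists M, e. repeat split; auto.
  eapply Rle_trans; [apply Rabs_pos|]. apply (HM 0). rewrite Rabs_R0. auto.
Qed.

Lemma coord_b x i : Rabs (coord x i) <= Rabs (fst x) + Rabs (snd x).
Proof. unfold coord. pose proof (Rabs_pos (fst x)). pose proof (Rabs_pos (snd x)). destruct (Nat.eqb i 0); lra. Qed.
Lemma kron_b i j : Rabs (kron i j) <= 1.
Proof. unfold kron. destruct (Nat.eqb i j); rewrite ?Rabs_R1, ?Rabs_R0; lra. Qed.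

Theorem proposition2p2 :
  forall (lam mu rho : R), 0 < mu -> 0 < 2 * mu + lam -> 0 < rho ->
  forall x : R * R, x <> (0, 0) ->
  exists C0 delta : R, 0 < delta /\
    forall om : R, 0 < om < delta ->
    forall i j : nat, (i < 2)%nat -> (j < 2)%nat ->
      Cmod (Gamma_om lam mu rho om x i j - expansion lam mu rho om x i j)%C
        <= C0 * Rabs (om ^ 4 * ln om + om ^ 4).
Proof.
  intros lam mu rho Hmu HP Hrho x Hx.
  assert (Hq : 0 < qq x).
  { destruct x as [a b]. unfold qq; simpl.
    destruct (Rle_or_lt (a ^ 2 + b ^ 2) 0) as [H|H]; auto.
    exfalso. apply Hx. assert (a = 0) by nra. assert (b = 0) by nra. subst. reflexivity. }
  destruct (bound_rem cA 3 good_cA) as [M1 [e1 [He1 [HM1 B1']]]].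
  destruct (bound_rem _ 2 (good_derive _ good_cA)) as [M2 [e2 [He2 [HM2 B2']]]].
  destruct (bound_rem _ 1 (good_derive _ (good_derive _ good_cA))) as [M3 [e3 [He3 [HM3 B3']]]].
  destruct (bound_rem dB 2 good_dB) as [M4 [e4 [He4 [HM4 B4']]]].
  destruct (bound_rem _ 2 (good_derive _ good_dB)) as [M5 [e5 [He5 [HM5 B5']]]].
  destruct (bound_rem _ 1 (good_derive _ (good_derive _ good_dB))) as [M6 [e6 [He6 [HM6 B6']]]].
  set (M := M1 + M2 + M3 + M4 + M5 + M6).
  set (eta := Rmin 1 (Rmin (Rmin e1 (Rmin e2 e3)) (Rmin e4 (Rmin e5 e6)))).
  assert (Heta : 0 < eta).
  { unfold eta. repeat apply Rmin_pos; lra. }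
  assert (Hrem : forall u, Rabs u < eta ->
    Rabs (RA3 u) <= M /\ Rabs (RA1 u) <= M /\ Rabs (RA2 u) <= M /\ Rabs (RB u) <= M /\
    Rabs (RB1 u) <= M /\ Rabs (RB2 u) <= M).
  { intros u Hu. unfold eta in Hu.
    pose proof (Rmin_r 1 (Rmin (Rmin e1 (Rmin e2 e3)) (Rmin e4 (Rmin e5 e6)))).
    pose proof (Rmin_l (Rmin e1 (Rmin e2 e3)) (Rmin e4 (Rmin e5 e6))).
    pose proof (Rmin_r (Rmin e1 (Rmin e2 e3)) (Rmin e4 (Rmin e5 e6))).
    pose proof (Rmin_l e1 (Rmin e2 e3)). pose proof (Rmin_r e1 (Rmin e2 e3)).
    pose proof (Rmin_l e2 e3). pose proof (Rmin_r e2 e3).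
    pose proof (Rmin_l e4 (Rmin e5 e6)). pose proof (Rmin_r e4 (Rmin e5 e6)).
    pose proof (Rmin_l e5 e6). pose proof (Rmin_r e5 e6).
    unfold M, RA3, RA1, RA2, RB, RB1, RB2.
    repeat split.
    - pose proof (B1' u ltac:(lra)). lra.
    - pose proof (B2' u ltac:(lra)). lra.
    - pose proof (B3' u ltac:(lra)). lra.
    - pose proof (B4' u ltac:(lra)). lra.
    - pose proof (B5' u ltac:(lra)). lra.
    - pose proof (B6' u ltac:(lra)). lra. }
  set (X := Rabs (fst x) + Rabs (snd x)).
  set (s0 := rho / mu * qq x / 4).
  set (p0 := rho / (2 * mu + lam) * qq x / 4).
  assert (Hs0 : 0 < s0) by (unfold s0; apply Rdiv_lt_0_compat; [apply Rmult_lt_0_compat; [apply Rdiv_lt_0_compat|]|]; lra).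
  assert (Hp0 : 0 < p0) by (unfold p0; apply Rdiv_lt_0_compat; [apply Rmult_lt_0_compat; [apply Rdiv_lt_0_compat|]|]; lra).
  destruct (Fre_b mu (2 * mu + lam) rho s0 p0 M X 0 0) as [K00 HK00].
  destruct (Fre_b mu (2 * mu + lam) rho s0 p0 M X 1 0) as [K10 HK10].
  destruct (Fre_b mu (2 * mu + lam) rho s0 p0 M X 0 1) as [K01 HK01].
  destruct (Fim_b mu (2 * mu + lam) rho s0 p0 M X) as [KI HKI].
  set (c1 := Rabs (ln s0)). set (c2 := Rabs (ln p0)).
  set (A := Rabs K00 + c1 * (Rabs K10 + Rabs K00) + c2 * (Rabs K01 + Rabs K00) + Rabs KI).
  set (B := 2 * (Rabs K10 + Rabs K00) + 2 * (Rabs K01 + Rabs K00)).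
  exists (3 * (A + B)), (Rmin (exp (-2)) (eta / (1 + s0 + p0))).
  split.
  { apply Rmin_pos. apply exp_pos. apply Rdiv_lt_0_compat; lra. }
  intros om [Hom Hd] i j Hi Hj.
  assert (Hd1 : om < exp (-2)) by (eapply Rlt_le_trans; [exact Hd| apply Rmin_l]).
  assert (Hd2 : om < eta / (1 + s0 + p0)) by (eapply Rlt_le_trans; [exact Hd| apply Rmin_r]).
  assert (Hexp : exp (-2) < 1) by (rewrite <- exp_0; apply exp_increasing; lra).
  assert (Hl : ln om < -2).
  { rewrite <- (ln_exp (-2)). apply ln_increasing; auto. }
  assert (Hom1 : om < 1) by lra.
  assert (Hw : om ^ 2 < om) by (simpl; nra).
  assert (Heta1 : eta <= 1) by (unfold eta; apply Rmin_l).
  assert (Hoe : om * (1 + s0 + p0) < eta).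
  { apply (Rmult_lt_compat_r (1 + s0 + p0)) in Hd2; [|lra].
    unfold Rdiv in Hd2. rewrite Rmult_assoc, Rinv_l, Rmult_1_r in Hd2; lra. }
  assert (Hw0 : 0 < om ^ 2) by (apply pow_lt; auto).
  assert (Hvs : Rabs (om ^ 2 * s0) < eta).
  { rewrite Rabs_right by nra. nra. }
  assert (Hvp : Rabs (om ^ 2 * p0) < eta).
  { rewrite Rabs_right by nra. nra. }
  destruct (Hrem _ Hvs) as [R1 [R2 [R3 [R4 [R5 R6]]]]].
  destruct (Hrem _ Hvp) as [R1' [R2' [R3' [R4' [R5' R6']]]]].
  assert (Hvs1 : Rabs (om ^ 2 * s0) <= 1) by lra.
  assert (Hvp1 : Rabs (om ^ 2 * p0) <= 1) by lra.
  pose proof (coord_b x i) as Hxi. pose proof (coord_b x j) as Hxj. pose proof (kron_b i j) as Hk.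
  rewrite (resid lam mu rho om x i j Hmu HP Hrho Hom Hq Hi Hj).
  fold s0 p0.
  eapply Rle_trans; [apply Cmod_le|].
  rewrite !Rabs_mult. rewrite (Rabs_right (om ^ 4)) by (apply Rle_ge, pow_le; lra).
  rewrite Fre_lin.
  set (Ls := ln (om ^ 2 * s0)). set (Lp := ln (om ^ 2 * p0)).
  assert (E00 := HK00 (coord x i) (coord x j) (kron i j) (om ^ 2 * s0) (om ^ 2 * p0) Hvs1 Hvp1 Hxi Hxj Hk R1 R1' R2 R2' R3 R3' R4 R5 R5' R6 R6').
  assert (E10 := HK10 (coord x i) (coord x j) (kron i j) (om ^ 2 * s0) (om ^ 2 * p0) Hvs1 Hvp1 Hxi Hxj Hk R1 R1' R2 R2' R3 R3' R4 R5 R5' R6 R6').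
  assert (E01 := HK01 (coord x i) (coord x j) (kron i j) (om ^ 2 * s0) (om ^ 2 * p0) Hvs1 Hvp1 Hxi Hxj Hk R1 R1' R2 R2' R3 R3' R4 R5 R5' R6 R6').
  assert (EI := HKI (coord x i) (coord x j) (kron i j) (om ^ 2 * s0) (om ^ 2 * p0) Hvs1 Hvp1 Hxi Hxj Hk R1 R2 R2' R3 R3').
  assert (HLs : Rabs Ls <= 2 * Rabs (ln om) + c1).
  { unfold Ls, c1. rewrite ln_mult, ln_pow by auto. simpl INR.
    pose proof (Rabs_triang (2 * ln om) (ln s0)). rewrite Rabs_mult, (Rabs_right 2) in H by lra. 
    replace ((1 + 1) * ln om) with (2 * ln om) by ring. lra. }
  assert (HLp : Rabs Lp <= 2 * Rabs (ln om) + c2).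
  { unfold Lp, c2. rewrite ln_mult, ln_pow by auto. simpl INR.
    pose proof (Rabs_triang (2 * ln om) (ln p0)). rewrite Rabs_mult, (Rabs_right 2) in H by lra. 
    replace ((1 + 1) * ln om) with (2 * ln om) by ring. lra. }
  set (F00 := Fre mu (2 * mu + lam) rho s0 p0 (coord x i) (coord x j) (kron i j) 0 0 (om ^ 2 * s0) (om ^ 2 * p0)) in *.
  set (F10 := Fre mu (2 * mu + lam) rho s0 p0 (coord x i) (coord x j) (kron i j) 1 0 (om ^ 2 * s0) (om ^ 2 * p0)) in *.
  set (F01 := Fre mu (2 * mu + lam) rho s0 p0 (coord x i) (coord x j) (kron i j) 0 1 (om ^ 2 * s0) (om ^ 2 * p0)) in *.
  set (FI := Fim mu (2 * mu + lam) rho s0 p0 (coord x i) (coord x j) (kron i j) (om ^ 2 * s0) (om ^ 2 * p0)) in *.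
  assert (Hre : Rabs (F00 + Ls * (F10 - F00) + Lp * (F01 - F00)) <= A + B * Rabs (ln om)).
  { pose proof (Rabs_triang (F00 + Ls * (F10 - F00)) (Lp * (F01 - F00))).
    pose proof (Rabs_triang F00 (Ls * (F10 - F00))).
    rewrite Rabs_mult in H, H0.
    pose proof (Rabs_triang F10 (- F00)). rewrite Rabs_Ropp in H1.
    pose proof (Rabs_triang F01 (- F00)). rewrite Rabs_Ropp in H2.
    unfold Rminus in *.
    assert (Rabs (F10 + - F00) <= Rabs K10 + Rabs K00).
    { pose proof (Rle_abs K10). pose proof (Rle_abs K00). lra. }
    assert (Rabs (F01 + - F00) <= Rabs K01 + Rabs K00).
    { pose proof (Rle_abs K01). pose proof (Rle_abs K00). lra. }
    pose proof (Rabs_pos Ls). pose proof (Rabs_pos Lp). pose proof (Rabs_pos (F10 + - F00)).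
    pose proof (Rabs_pos (F01 + - F00)). pose proof (Rabs_pos (ln om)).
    pose proof (Rle_abs K00). pose proof (Rle_abs KI).
    assert (Rabs Ls * Rabs (F10 + - F00) <= (2 * Rabs (ln om) + c1) * (Rabs K10 + Rabs K00)).
    { apply Rmult_le_compat; auto. }
    assert (Rabs Lp * Rabs (F01 + - F00) <= (2 * Rabs (ln om) + c2) * (Rabs K01 + Rabs K00)).
    { apply Rmult_le_compat; auto. }
    unfold A, B. pose proof (Rabs_pos KI). lra. }
  assert (HI : Rabs FI <= Rabs KI) by (pose proof (Rle_abs KI); lra).
  assert (Hlom : Rabs (ln om) = - ln om) by (apply Rabs_left; lra).
  assert (Hfin : Rabs (om ^ 4 * ln om + om ^ 4) = om ^ 4 * (- ln om - 1)).
  { replace (om ^ 4 * ln om + om ^ 4) with (- (om ^ 4 * (- ln om - 1))) by ring.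
    rewrite Rabs_Ropp, Rabs_right; auto. apply Rle_ge, Rmult_le_pos. apply pow_le; lra. lra. }
  rewrite Hfin.
  assert (H4 : 0 < om ^ 4) by (apply pow_lt; auto).
  assert (HA : 0 <= A).
  { unfold A, c1, c2. pose proof (Rabs_pos K00). pose proof (Rabs_pos K10). pose proof (Rabs_pos K01).
    pose proof (Rabs_pos KI). pose proof (Rabs_pos (ln s0)). pose proof (Rabs_pos (ln p0)). nra. }
  assert (HB : 0 <= B).
  { unfold B. pose proof (Rabs_pos K00). pose proof (Rabs_pos K10). pose proof (Rabs_pos K01). lra. }
  rewrite Hlom in Hre.
  assert (om ^ 4 * Rabs (F00 + Ls * (F10 - F00) + Lp * (F01 - F00)) <= om ^ 4 * (A + B * - ln om))
    by (apply Rmult_le_compat_l; lra).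
  assert (om ^ 4 * Rabs FI <= om ^ 4 * Rabs KI) by (apply Rmult_le_compat_l; lra).
  assert (Rabs KI <= A) by (unfold A; pose proof (Rabs_pos K00); pose proof (Rabs_pos K10); pose proof (Rabs_pos K01);
     unfold c1, c2; pose proof (Rabs_pos (ln s0)); pose proof (Rabs_pos (ln p0)); nra).
  set (t := - ln om) in *.
  assert (Ht : 2 <= t) by (unfold t; lra).
  assert (Hkey : 2 * A + B * t <= 3 * (A + B) * (t - 1)).
  { assert (0 <= A * (t - 2)) by (apply Rmult_le_pos; lra).
    assert (0 <= B * (t - 2)) by (apply Rmult_le_pos; lra). nra. }
  assert (om ^ 4 * (2 * A + B * t) <= om ^ 4 * (3 * (A + B) * (t - 1))) by (apply Rmult_le_compat_l; lra).
  assert (om ^ 4 * Rabs KI <= om ^ 4 * A) by (apply Rmult_le_compat_l; lra).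
  replace (3 * (A + B) * (om ^ 4 * (t - 1))) with (om ^ 4 * (3 * (A + B) * (t - 1))) by ring.
  replace (- ln om - 1) with (t - 1) by (unfold t; ring).
  replace (om ^ 4 * (2 * A + B * t)) with (om ^ 4 * (A + B * t) + om ^ 4 * A) in * by ring.
  lra.
Qed.
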